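(* Let $n\ge 4$, $Q=\{0,1,\dots,n-1\}$, and let $\mathcal{W}_n=(Q,\{a,b,c,d,e\},\delta,0,\{1\})$ be the DFA whose letters induce the following transformations of $Q$: $a$: $0\mapsto n-1$, $i\mapsto i+1$ for $1\le i\le n-3$, $n-2\mapsto 1$, $n-1\mapsto n-1$; $b$: $0\mapsto n-1$, $1\mapsto 2$, $2\mapsto 1$, all other states fixed; $c$: $0\mapsto n-1$, $n-2\mapsto 1$, all other states fixed; $d$: $0\mapsto n-1$, $1\mapsto n-1$, all other states fixed; $e$: $0\mapsto 1$, every state $q\neq 0$ mapped to $n-1$. Then $\mathcal{W}_n$ is minimal, the language it accepts is suffix-free, and its transition semigroup equals $\mathbf{W}_{\mathrm{sf}}(n)$, which has cardinality $(n-1)^{n-2}+n-2$. In particular, $\mathbf{W}_{\mathrm{sf}}(n)$ contains (a) all $(n-1)^{n-2}$ transformations of $Q$ that send $0$ and $n-1$ to $n-1$ and map $\{1,\dots,n-2\}$ into $Q\setminus\{0\}$, and (b) all $n-2$ transformations that send $0$ to a state in $\{1,\dots,n-2\}$ and map all other states to $n-1$.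
   Context: Transformations act on the right: $qt$ is the image of $q$ under $t$, and $st$ denotes applying $s$ first, then $t$. The transition semigroup of a DFA is the semigroup of transformations of its state set generated by the transformations induced by its letters. A language $L$ is suffix-free if whenever $w\in L$ and $u\in L$ with $u$ a suffix of $w$, then $u=w$. Define $\mathbf{B}_{\mathrm{sf}}(n)=\{t:Q\to Q \mid 0\notin Qt,\ (n-1)t=n-1,\ \text{and for all } j\ge1:\ 0t^j=n-1 \text{ or } 0t^j\neq qt^j \text{ for all } q \text{ with } 0<q<n-1\}$, and $\mathbf{W}_{\mathrm{sf}}(n)=\{t\in\mathbf{B}_{\mathrm{sf}}(n)\mid 0t=n-1 \text{ or } qt=n-1 \text{ for all } q \text{ with } 1\le q\le n-2\}$. *)

(* Defs.v *)
From HB Require Import structures.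
From mathcomp Require Import all_boot.
Set Implicit Arguments. Unset Strict Implicit. Unset Printing Implicit Defensive.

Definition dstar (Q A : Type) (delta : Q -> A -> Q) (q : Q) (w : seq A) : Q :=
  foldl delta q w.

Definition accepts (Q A : Type) (delta : Q -> A -> Q) (q0 : Q) (F : pred Q)
  (w : seq A) : bool := F (dstar delta q0 w).

Definition minimal_dfa (Q : finType) (A : Type) (delta : Q -> A -> Q) (q0 : Q)
  (F : pred Q) : Prop :=
  forall (Q' : finType) (delta' : Q' -> A -> Q') (q0' : Q') (F' : pred Q'),
    (forall w, accepts delta' q0' F' w = accepts delta q0 F w) -> #|Q| <= #|Q'|.

Definition suffix_free (A : eqType) (L : seq A -> bool) : Prop :=
  forall w u, L w -> L u -> suffix u w -> u = w.

(* Membership in the transition semigroup: t is induced by some non-empty word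
   (right action: q t = t q; the word x1...xk induces "x1 then ... then xk"). *)
Definition in_trans_semigroup (Q : finType) (A : Type) (delta : Q -> A -> Q)
  (t : {ffun Q -> Q}) : Prop :=
  exists w : seq A, w <> [::] /\ forall q, t q = dstar delta q w.

Definition Bsf (n : nat) (t : {ffun 'I_n -> 'I_n}) : Prop :=
  (forall q : 'I_n, val (t q) <> 0)
  /\ (forall q : 'I_n, val q = n.-1 -> val (t q) = n.-1)
  /\ (forall j : nat, 1 <= j -> forall p : 'I_n, val p = 0 ->
        val (iter j t p) = n.-1
        \/ (forall q : 'I_n, 0 < val q < n.-1 -> iter j t p <> iter j t q)).

Definition Wsf (n : nat) (t : {ffun 'I_n -> 'I_n}) : Prop :=
  Bsf t /\
  ((forall p : 'I_n, val p = 0 -> val (t p) = n.-1)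
   \/ (forall q : 'I_n, 1 <= val q <= n - 2 -> val (t q) = n.-1)).

Inductive letter := La | Lb | Lc | Ld | Le.

Definition letter_eqb (x y : letter) : bool :=
  match x, y with
  | La, La | Lb, Lb | Lc, Lc | Ld, Ld | Le, Le => true
  | _, _ => false
  end.

Lemma letter_eqP : Equality.axiom letter_eqb.
Proof. by case; case; constructor. Qed.

HB.instance Definition _ := hasDecEq.Build letter letter_eqP.

(* transformation given by a nat-valued rule (the rules below always land in
   {0,...,n-1}; insubd is only a typing device) *)
Definition natmap (n : nat) (f : nat -> nat) : {ffun 'I_n -> 'I_n} :=
  [ffun q : 'I_n => insubd q (f (val q))].

Definition W_letter (n : nat) (x : letter) : {ffun 'I_n -> 'I_n} :=
  match x with
  | La => natmap n (fun i => if i == 0 then n.-1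
                            else if (1 <= i <= n - 3) then i.+1
                            else if i == n - 2 then 1
                            else i)
  | Lb => natmap n (fun i => if i == 0 then n.-1
                            else if i == 1 then 2
                            else if i == 2 then 1
                            else i)
  | Lc => natmap n (fun i => if i == 0 then n.-1
                            else if i == n - 2 then 1
                            else i)
  | Ld => natmap n (fun i => if i == 0 then n.-1
                            else if i == 1 then n.-1
                            else i)
  | Le => natmap n (fun i => if i == 0 then 1 else n.-1)
  end.

Definition W_delta (n : nat) (q : 'I_n) (x : letter) : 'I_n := W_letter n x q.

Definition W_final (n : nat) : pred 'I_n := fun q => val q == 1.

(* Main.v *)
Require Import Defs.
From HB Require Import structures.
From mathcomp Require Import all_boot.
From mathcomp Require Import zify.
From Stdlib Require Import Classical ClassicalEpsilon.
Set Implicit Arguments. Unset Strict Implicit. Unset Printing Implicit Defensive.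

Ltac split_ifs :=
  repeat match goal with
  | |- context [if ?c then _ else _] =>
      lazymatch c with
      | context [if _ then _ else _] => fail
      | _ => let H := fresh "Hc" in destruct c eqn:H; simpl
      end
  end.

Lemma dstar_cat (Q A : Type) (d : Q -> A -> Q) q p u :
  dstar d q (p ++ u) = dstar d (dstar d q p) u.
Proof. exact: foldl_cat. Qed.

Section Gen.
Variable n : nat.
Hypothesis Hn : 4 <= n.

Definition Sn (f : nat -> nat) : Prop :=
  exists w : seq letter, w <> [::] /\
    forall q : 'I_n, val (dstar (@W_delta n) q w) = f (val q).

Lemma Sn_ext f g : Sn f -> (forall q, q < n -> f q = g q) -> Sn g.
Proof. move=> [w [Hw Hf]] Hfg; exists w; split=> // q; rewrite Hf Hfg //; exact: ltn_ord. Qed.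

Lemma Sn_comp f g : Sn f -> Sn g -> Sn (fun q => g (f q)).
Proof.
move=> [w1 [Hw1 H1]] [w2 [Hw2 H2]]; exists (w1 ++ w2); split.
  by clear H1; case: w1 Hw1.
move=> q; rewrite /dstar foldl_cat -/(dstar _ _ w1) H2 H1 //.
Qed.

Lemma Sn_nm x f : (forall q, q < n -> f q < n) -> W_letter n x = natmap n f -> Sn f.
Proof.
move=> Hf Hx; exists [:: x]; split=> // q.
rewrite /dstar /= /W_delta Hx /natmap ffunE insubdK //; exact: Hf (ltn_ord q).
Qed.

Notation N := n.-1.

Definition ra i := if i == 0 then n.-1
                   else if (1 <= i <= n - 3) then i.+1
                   else if i == n - 2 then 1 else i.
Definition rb i := if i == 0 then n.-1 else if i == 1 then 2
                   else if i == 2 then 1 else i.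
Definition rc i := if i == 0 then n.-1 else if i == n - 2 then 1 else i.
Definition rd i := if i == 0 then n.-1 else if i == 1 then n.-1 else i.
Definition re i := if i == 0 then 1 else n.-1.

Lemma Sra : Sn ra.
Proof. apply: (@Sn_nm La) => // q Hq; rewrite /ra; split_ifs; lia. Qed.
Lemma Srb : Sn rb.
Proof. apply: (@Sn_nm Lb) => // q Hq; rewrite /rb; split_ifs; lia. Qed.
Lemma Src : Sn rc.
Proof. apply: (@Sn_nm Lc) => // q Hq; rewrite /rc; split_ifs; lia. Qed.
Lemma Srd : Sn rd.
Proof. apply: (@Sn_nm Ld) => // q Hq; rewrite /rd; split_ifs; lia. Qed.
Lemma Sre : Sn re.
Proof. apply: (@Sn_nm Le) => // q Hq; rewrite /re; split_ifs; lia. Qed.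

Definition sw i j q := if q == 0 then N else if q == i then j else if q == j then i else q.
Definition mg i j q := if q == 0 then N else if q == i then j else q.
Definition sh k q := if q == 0 then N else if q == N then N
                     else if q + k <= n - 2 then q + k else q + k - (n - 2).
Definition id' q := if q == 0 then N else q.

Lemma Sid : Sn id'.
Proof. apply: Sn_ext (Sn_comp Srb Srb) _ => q Hq; rewrite /rb /id'; split_ifs; lia. Qed.

Lemma Ssh k : 1 <= k <= n - 3 -> Sn (sh k).
Proof.
elim: k => // k IH Hk; case: (posnP k) => [->|Hk0].
  apply: Sn_ext Sra _ => q Hq; rewrite /ra /sh; split_ifs; lia.
apply: Sn_ext (Sn_comp (IH _) Sra) _; first lia.
move=> q Hq; rewrite /ra /sh; split_ifs; lia.
Qed.

Lemma Sswadj k : 1 <= k <= n - 3 -> Sn (sw k k.+1).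
Proof.
move=> Hk; case: (ltnP k 2) => Hk2.
  apply: Sn_ext Srb _ => q Hq; rewrite /rb /sw; split_ifs; lia.
have H1 := Ssh (k := n - 1 - k) ltac:(lia).
have H2 := Ssh (k := k - 1) ltac:(lia).
apply: Sn_ext (Sn_comp (Sn_comp H1 Srb) H2) _ => q Hq.
rewrite /rb /sw /sh; split_ifs; lia.
Qed.

Lemma Ssw1 j : 2 <= j <= n - 2 -> Sn (sw 1 j).
Proof.
elim: j => // j IH Hj; case: (ltnP j 2) => Hj2.
  apply: Sn_ext Srb _ => q Hq; rewrite /rb /sw; split_ifs; lia.
have H1 := Sswadj (k := j) ltac:(lia).
apply: Sn_ext (Sn_comp (Sn_comp H1 (IH ltac:(lia))) H1) _ => q Hq.
rewrite /sw; split_ifs; lia.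
Qed.

Lemma Ssw i j : 1 <= i <= n - 2 -> 1 <= j <= n - 2 -> Sn (sw i j).
Proof.
move=> Hi Hj.
case: (eqVneq i j) => [<-|/eqP Hij].
  apply: Sn_ext Sid _ => q Hq; rewrite /id' /sw; split_ifs; lia.
case: (eqVneq i 1) => [Hi1|/eqP Hi1]; first by subst i; apply: Ssw1; lia.
case: (eqVneq j 1) => [Hj1|/eqP Hj1]; first subst j.
  apply: Sn_ext (Ssw1 (j := i) ltac:(lia)) _ => q Hq; rewrite /sw; split_ifs; lia.
have H1 := Ssw1 (j := i) ltac:(lia).
apply: Sn_ext (Sn_comp (Sn_comp H1 (Ssw1 (j := j) ltac:(lia))) H1) _ => q Hq.
rewrite /sw; split_ifs; lia.
Qed.

Lemma Smgm j : 1 <= j <= n - 3 -> Sn (mg (n - 2) j).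
Proof.
move=> Hj; case: (eqVneq j 1) => [Hj1|/eqP Hj1]; first subst j.
  apply: Sn_ext Src _ => q Hq; rewrite /rc /mg; split_ifs; lia.
have H1 := Ssw (i := 1) (j := j) ltac:(lia) ltac:(lia).
apply: Sn_ext (Sn_comp (Sn_comp H1 (Sn_ext Src (g := mg (n-2) 1) _)) H1) _.
  move=> q Hq; rewrite /rc /mg; split_ifs; lia.
move=> q Hq; rewrite /sw /mg; split_ifs; lia.
Qed.

Lemma Smg i j : 1 <= i <= n - 2 -> 1 <= j <= n - 2 -> i != j -> Sn (mg i j).
Proof.
move=> Hi Hj /eqP Hij.
case: (eqVneq i (n - 2)) => [Him|/eqP Him]; first by subst i; apply: Smgm; lia.
have H1 := Ssw (i := i) (j := n - 2) ltac:(lia) ltac:(lia).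
case: (eqVneq j (n - 2)) => [Hjm|/eqP Hjm].
  apply: Sn_ext (Sn_comp (Sn_comp H1 (Smgm (j := i) ltac:(lia))) H1) _ => q Hq.
  rewrite /sw /mg; split_ifs; lia.
apply: Sn_ext (Sn_comp (Sn_comp H1 (Smgm (j := j) ltac:(lia))) H1) _ => q Hq.
rewrite /sw /mg; split_ifs; lia.
Qed.

Lemma Skl i : 1 <= i <= n - 2 -> Sn (mg i N).
Proof.
move=> Hi; have Hd : Sn (mg 1 N).
  apply: Sn_ext Srd _ => q Hq; rewrite /rd /mg; split_ifs; lia.
have H1 := Ssw (i := 1) (j := i) ltac:(lia) ltac:(lia).
apply: Sn_ext (Sn_comp (Sn_comp H1 Hd) H1) _ => q Hq.
rewrite /sw /mg; split_ifs; lia.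
Qed.

Definition tA (f : nat -> nat) :=
  f 0 = N /\ f N = N /\ (forall q, 1 <= q <= n - 2 -> 1 <= f q <= N).

Lemma tA_range f q : tA f -> q < n -> 1 <= f q <= N.
Proof.
move=> [H0 [HN Hi]] Hq.
case: (posnP q) => [->|Hq0]; first by rewrite H0; lia.
case: (eqVneq q N) => [->|/eqP HqN]; first by rewrite HN; lia.
apply: Hi; lia.
Qed.

Lemma sw_inv i j y : i != 0 -> j != 0 -> y != 0 -> sw i j (sw i j y) = y.
Proof. move=> /eqP ? /eqP ? /eqP ?; rewrite /sw; split_ifs; lia. Qed.

Lemma sub_in_count (T : eqType) (P Q : pred T) s :
  (forall y, y \in s -> Q y -> P y) -> count Q s <= count P s.
Proof.
elim: s => //= a s IH Hs.
have Hs' : forall y, y \in s -> Q y -> P y.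
  by move=> y Hy; apply: Hs; rewrite inE Hy orbT.
have IH' := IH Hs'.
case HQa: (Q a); first by rewrite (Hs a (mem_head _ _) HQa).
by rewrite add0n; apply: leq_trans IH' _; exact: leq_addl.
Qed.

Lemma count_lt (T : eqType) (P Q : pred T) s x :
  (forall y, y \in s -> Q y -> P y) -> x \in s -> P x -> ~~ Q x ->
  count Q s < count P s.
Proof.
elim: s => //= a s IH Hs Hx0 HP HQ.
have Hs' : forall y, y \in s -> Q y -> P y.
  by move=> z Hz; apply: Hs; rewrite inE Hz orbT.
move: Hx0; rewrite inE => /orP[/eqP Hxa|Hx].
  subst a; rewrite HP (negbTE HQ) add0n add1n ltnS.
  exact: sub_in_count.
have := IH Hs' Hx HP HQ.
case HQa: (Q a); last by rewrite add0n => H; apply: leq_trans H _; exact: leq_addl.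
by rewrite (Hs a (mem_head _ _) HQa).
Qed.

Definition inners := iota 1 (n - 2).
Lemma mem_inners q : (q \in inners) = (1 <= q <= n - 2).
Proof. rewrite /inners mem_iota; lia. Qed.

Lemma Sperm k f : tA f -> (forall q, 1 <= q <= n - 2 -> f q <= n - 2) ->
  (forall p q, 1 <= p <= n - 2 -> 1 <= q <= n - 2 -> f p = f q -> p = q) ->
  count (fun q => f q != q) inners <= k -> Sn f.
Proof.
elim: k f => [|k IH] f HA Htot Hinj Hc.
  apply: Sn_ext Sid _ => q Hq.
  move: HA => [H0 [HN Hi]].
  case: (posnP q) => [->|Hq0]; first by rewrite H0.
  case: (eqVneq q N) => [->|/eqP HqN]; first by rewrite HN /id'; case: ifP => //; lia.
  rewrite /id' ifF; last lia.
  have : q \in inners by rewrite mem_inners; lia.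
  move: Hc; rewrite leqn0 -(negbK (_ == 0)) -lt0n -has_count => /hasPn H /H.
  by rewrite negbK => /eqP.
case: (boolP (has (fun q => f q != q) inners)) => [/hasP [i Hi Hfi]|Hn0].
  move: Hi; rewrite mem_inners => Hi.
  have Hfi1 := Htot i Hi.
  have Hfi2 := tA_range (q := i) HA ltac:(lia).
  set f' := fun q => sw i (f i) (f q).
  have Hf' : Sn f'.
    apply: IH.
    - move: HA => [H0 [HN Hin]]; split; [|split].
      + by rewrite /f' H0 /sw; split_ifs; lia.
      + by rewrite /f' HN /sw; split_ifs; lia.
      + move=> q Hq; have := Hin q Hq; have := Htot q Hq; rewrite /f' /sw; split_ifs; lia.
    - move=> q Hq; have := Htot q Hq; have := tA_range (q := q) HA ltac:(lia).
      rewrite /f' /sw; split_ifs; lia.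
    - move=> p q Hp Hq; rewrite /f' => Heq.
      apply: Hinj => //.
      have := tA_range (q := p) HA ltac:(lia); have := tA_range (q := q) HA ltac:(lia).
      move=> H1 H2; rewrite -(@sw_inv i (f i) (f p)); try (apply/eqP; lia).
      by rewrite Heq sw_inv //; apply/eqP; lia.
    - rewrite -ltnS; apply: leq_trans Hc.
      apply: (@count_lt _ _ _ _ i); last first.
      + by rewrite /f' /sw /=; split_ifs; lia.
      + exact: Hfi.
      + by rewrite mem_inners.
      + move=> y; rewrite mem_inners => Hy; apply: contraNN => /eqP Hfy.
        apply/eqP; rewrite /f' Hfy /sw.
        have Hyi : y != i by apply/eqP => Hyi; move: Hfi; rewrite -Hyi Hfy eqxx.
        have Hyfi : y != f i.
          apply/eqP => Hyfi; move/eqP: Hyi; apply; apply: Hinj => //; congruence.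
        rewrite (negbTE Hyi) (negbTE Hyfi); case: ifP => //; lia.
  have Hsw := Ssw (i := i) (j := f i) Hi ltac:(lia).
  apply: Sn_ext (Sn_comp Hf' Hsw) _ => q Hq; rewrite /f' sw_inv //;
    apply/eqP; have := tA_range (q := q) HA Hq; lia.
apply: IH => //; move: Hn0; rewrite has_count -leqNgt leqn0 => /eqP ->.
exact: leq0n.
Qed.

Lemma uniq_map_inj (f : nat -> nat) s x y :
  uniq (map f s) -> x \in s -> y \in s -> f x = f y -> x = y.
Proof.
elim: s => //= a s IH /andP[Hna Hu]; rewrite !inE => /orP[/eqP->|Hx] /orP[/eqP->|Hy] Hf //.
- by move: Hna; rewrite Hf map_f.
- by move: Hna; rewrite -Hf map_f.
- exact: IH.
Qed.

Lemma size_inners : size inners = n - 2.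
Proof. by rewrite /inners size_iota. Qed.

Lemma perm_of_uniq f : tA f -> (forall q, 1 <= q <= n - 2 -> f q <= n - 2) ->
  uniq (map f inners) -> Sn f.
Proof.
move=> HA Htot Hu; apply: (@Sperm (n - 2)) => //.
  by move=> p q Hp Hq; apply: (uniq_map_inj Hu); rewrite mem_inners.
by rewrite -size_inners count_size.
Qed.

Lemma nonuniq_facts f : (forall q, 1 <= q <= n - 2 -> 1 <= f q <= n - 2) ->
  ~~ uniq (map f inners) ->
  (exists i j, i \in inners /\ j \in inners /\ i <> j /\ f i = f j) /\
  (exists v, v \in inners /\ v \notin map f inners).
Proof.
move=> Htot Hu; split.
  apply: NNPP => H; move/negP: Hu; apply.
  rewrite map_inj_in_uniq ?iota_uniq // => x y Hx Hy Hxy.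
  apply: NNPP => Hne; apply: H; exists x, y; split=> //.
case: (boolP (has (fun v => v \notin map f inners) inners)) => [/hasP [v Hv Hnv]|Hnh].
  by exists v.
exfalso; move/negP: Hu; apply.
have Hsub : {subset inners <= map f inners}.
  by move=> v Hv; move/hasPn: Hnh => /(_ v Hv); rewrite negbK.
have Hsub2 : {subset map f inners <= inners}.
  by move=> v /mapP [x Hx ->]; rewrite mem_inners; apply: Htot; rewrite -mem_inners.
have [_ Heq] := uniq_min_size (iota_uniq 1 (n - 2)) Hsub ltac:(by rewrite size_map).
by rewrite (uniq_size_uniq (iota_uniq 1 (n - 2)) Heq) size_map eqxx.
Qed.

Lemma Stot k f : tA f -> (forall q, 1 <= q <= n - 2 -> f q <= n - 2) ->
  count (fun v => v \notin map f inners) inners <= k -> Sn f.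
Proof.
have Hrng : forall f, tA f -> (forall q, 1 <= q <= n - 2 -> f q <= n - 2) ->
    forall q, 1 <= q <= n - 2 -> 1 <= f q <= n - 2.
  move=> f0 HA0 Ht0 q Hq; have := Ht0 q Hq; have := tA_range (q := q) HA0 ltac:(lia); lia.
elim: k f => [|k IH] f HA Htot Hc; case: (boolP (uniq (map f inners))) => Hu;
  first [exact: perm_of_uniq | idtac];
  have [[i [j [Hi [Hj [Hij Hfij]]]]] [v [Hv Hnv]]] := nonuniq_facts (Hrng f HA Htot) Hu.
  have : 0 < count (fun v => v \notin map f inners) inners.
    by rewrite -has_count; apply/hasP; exists v.
  lia.
move: Hi Hj Hv; rewrite !mem_inners => Hi Hj Hv'.
set f' := fun q => if q == i then v else f q.
have Hf' : Sn f'.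
  apply: IH.
  - move: HA => [H0 [HN Hin]]; split; [|split].
    + by rewrite /f' ifF ?H0 //; apply/eqP; lia.
    + by rewrite /f' ifF ?HN //; apply/eqP; lia.
    + by move=> q Hq; rewrite /f'; case: ifP => _; [lia | exact: Hin].
  - by move=> q Hq; rewrite /f'; case: ifP => _; [lia | exact: Htot].
  - rewrite -ltnS; apply: leq_trans Hc.
    apply: (@count_lt _ _ _ _ v); last first.
    + by rewrite negbK; apply/mapP; exists i; rewrite ?mem_inners // /f' eqxx.
    + exact: Hnv.
    + by rewrite mem_inners.
    + move=> y _; apply: contraNN => /mapP [x Hx ->]; apply/mapP.
      case: (eqVneq x i) => [Hxi|Hxi].
        exists j; first by rewrite mem_inners.
        have Hji : (j == i) = false by apply/eqP => H; apply: Hij; rewrite H.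
        by rewrite /f' Hji Hxi Hfij.
      by exists x => //; rewrite /f' ifF //; apply/negbTE.
have Hij' : i != j by apply/eqP.
have Hm := Smg Hi Hj Hij'.
apply: Sn_ext (Sn_comp Hm Hf') _ => q Hq.
move: HA => [H0 [HN Hin]].
have HNi : (N == i) = false by apply/eqP; lia.
have Hi0 : (i == 0) = false by apply/eqP; lia.
have Hji : (j == i) = false by apply/eqP => H; apply: Hij; rewrite H.
case: (eqVneq q 0) => [->|Hq0]; first by rewrite /mg /f' /= HNi HN H0.
case: (eqVneq q i) => [->|Hqi]; first by rewrite /mg /f' Hi0 eqxx Hji Hfij.
by rewrite /mg /f' (negbTE Hq0) (negbTE Hqi) (negbTE Hqi).
Qed.

Lemma Stotal f : tA f -> (forall q, 1 <= q <= n - 2 -> f q <= n - 2) -> Sn f.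
Proof. by move=> HA Ht; apply: (@Stot (n - 2)) => //; rewrite -size_inners count_size. Qed.

Lemma Skill k f : tA f -> count (fun q => f q == N) inners <= k -> Sn f.
Proof.
elim: k f => [|k IH] f HA Hc;
  case: (boolP (has (fun q => f q == N) inners)) => [/hasP[i Hi /eqP Hfi]|Hnh];
  try (apply: Stotal => // q Hq; move/hasPn: Hnh => /(_ q); rewrite mem_inners => /(_ Hq);
       have := tA_range (q := q) HA ltac:(lia); lia).
  have : 0 < count (fun q => f q == N) inners by rewrite -has_count; apply/hasP; exists i => //; apply/eqP.
  lia.
move: (Hi); rewrite mem_inners => Hi'.
set f' := fun q => if q == i then 1 else f q.
have Hf' : Sn f'.
  apply: IH.
  - move: HA => [H0 [HN Hin]]; split; [|split].
    + by rewrite /f' ifF ?H0 //; apply/eqP; lia.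
    + by rewrite /f' ifF ?HN //; apply/eqP; lia.
    + by move=> q Hq; rewrite /f'; case: ifP => _; [lia | exact: Hin].
  - rewrite -ltnS; apply: leq_trans Hc.
    apply: (@count_lt _ _ _ _ i) => //; last by rewrite /f' eqxx; apply/eqP; lia.
      move=> y _; rewrite /f'; case: ifP => // _ /eqP; lia.
    by apply/eqP.
apply: Sn_ext (Sn_comp (Skl Hi') Hf') _ => q Hq.
move: HA => [H0 [HN Hin]].
rewrite /mg /f'; case: (eqVneq q 0) => [->|Hq0]; first by rewrite ifF ?HN //; apply/eqP; lia.
case: (eqVneq q i) => [->|Hqi]; first by rewrite ifF ?HN //; apply/eqP; lia.
by rewrite (negbTE Hqi).
Qed.

Lemma SA f : tA f -> Sn f.
Proof. by move=> HA; apply: (@Skill (n - 2)) => //; rewrite -size_inners count_size. Qed.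

Lemma SB k : 1 <= k <= n - 2 -> Sn (fun q => if q == 0 then k else N).
Proof.
move=> Hk; apply: Sn_ext (Sn_comp Sre (Ssw (i := 1) (j := k) ltac:(lia) Hk)) _ => q Hq.
rewrite /re /sw; split_ifs; lia.
Qed.

Definition rule x := match x with La => ra | Lb => rb | Lc => rc | Ld => rd | Le => re end.

Lemma valW x (q : 'I_n) : val (W_delta q x) = rule x (val q).
Proof.
have Hq := ltn_ord q.
case: x; rewrite /W_delta /= /natmap ffunE insubdK //=;
  rewrite ?/ra ?/rb ?/rc ?/rd ?/re; split_ifs; lia.
Qed.

Definition PA (g : 'I_n -> 'I_n) :=
  (forall q : 'I_n, val q = 0 -> val (g q) = N) /\
  (forall q : 'I_n, val q = N -> val (g q) = N) /\
  (forall q : 'I_n, val q <> 0 -> val (g q) <> 0).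
Definition PB (g : 'I_n -> 'I_n) :=
  (forall q : 'I_n, val q = 0 -> 1 <= val (g q) <= n - 2) /\
  (forall q : 'I_n, val q <> 0 -> val (g q) = N).

Lemma PAB_comp (l h : 'I_n -> 'I_n) : PA l \/ PB l -> PA h \/ PB h ->
  PA (fun q => h (l q)) \/ PB (fun q => h (l q)).
Proof.
move=> [[l0 [lN l1]]|[l0 l1]] [[h0 [hN h1]]|[h0 h1]].
- left; split; [|split] => q Hq.
  + by apply: hN; apply: l0.
  + by apply: hN; apply: lN.
  + by apply: h1; apply: l1.
- left; split; [|split] => q Hq.
  + by apply: h1; rewrite l0 //; lia.
  + by apply: h1; rewrite lN //; lia.
  + by rewrite h1 //; [lia | apply: l1].
- case: (classic (forall q : 'I_n, val q = 0 -> val (h (l q)) = N)) => [Hall|Hno].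
    left; split; [|split] => q Hq.
    + exact: Hall.
    + by apply: hN; apply: l1; lia.
    + by rewrite hN //; [lia | apply: l1].
  right; split => q Hq.
    have [p [Hp0 HpN]] : exists p : 'I_n, val p = 0 /\ val (h (l p)) <> N.
      apply: NNPP => H; apply: Hno => p Hp; apply: NNPP => Hne; apply: H; exists p; split=> //.
    have -> : q = p by apply: val_inj; rewrite Hq Hp0.
    have := h1 (l p); have := l0 p Hp0; have Hb : val (h (l p)) < n := ltn_ord _; lia.
  by apply: hN; apply: l1.
- left; split; [|split] => q Hq.
  + by apply: h1; have := l0 q Hq; lia.
  + by apply: h1; rewrite l1 //; lia.
  + by rewrite h1 //; [lia | rewrite l1 //; lia].
Qed.

Lemma letter_PAB x : PA (fun q => W_delta q x) \/ PB (fun q => W_delta q x).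
Proof.
have Hq' : forall q : 'I_n, val q < n := fun q => ltn_ord q.
case: x; [left|left|left|left|right]; try (split; [|split]); try split;
  move=> q Hq; move: Hq (Hq' q); rewrite valW /= ?/ra ?/rb ?/rc ?/rd ?/re; split_ifs; lia.
Qed.

Lemma word_PAB w (g : 'I_n -> 'I_n) : w <> [::] ->
  (forall q, g q = dstar (@W_delta n) q w) -> PA g \/ PB g.
Proof.
elim: w g => // x w IH g _ Hg.
have Hg' : forall q, g q = dstar (@W_delta n) (W_delta q x) w by move=> q; rewrite Hg.
clear Hg; case: w IH Hg' => [|y w] IH Hg'.
  have := letter_PAB x; move=> [[a1 [a2 a3]]|[b1 b2]]; [left; split; [|split]|right; split];
    move=> q Hq; rewrite Hg';
    first [exact: a1 q Hq | exact: a2 q Hq | exact: a3 q Hq | exact: b1 q Hq | exact: b2 q Hq].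
have := PAB_comp (letter_PAB x) (IH (fun q => dstar (@W_delta n) q (y :: w)) ltac:(done) (fun q => erefl)).
move=> [[a1 [a2 a3]]|[b1 b2]]; [left; split; [|split]|right; split];
  move=> q Hq; rewrite Hg';
  first [exact: a1 q Hq | exact: a2 q Hq | exact: a3 q Hq | exact: b1 q Hq | exact: b2 q Hq].
Qed.

Lemma iterN (t : {ffun 'I_n -> 'I_n}) (p : 'I_n) j0 :
  (forall q : 'I_n, val q = N -> val (t q) = N) ->
  val (iter j0 t p) = N -> forall j, j0 <= j -> val (iter j t p) = N.
Proof.
move=> HN H0 j Hj; elim: j Hj => [|j IH] Hj.
  by move: Hj; rewrite leqn0 => /eqP Hj; rewrite -Hj.
case: (eqVneq j0 j.+1) => [<-//|Hne].
by rewrite iterS; apply: HN; apply: IH; move/eqP: Hne; lia.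
Qed.

Lemma Wsf_PAB (t : {ffun 'I_n -> 'I_n}) : Wsf t <-> PA t \/ PB t.
Proof.
have Hlt : forall q : 'I_n, val q < n := fun q => ltn_ord q.
split.
  move=> [[H0 [HN Hj]] [Hl|Hr]].
    by left; split; [|split] => // q _; apply: H0.
  case: (classic (forall q : 'I_n, val q = 0 -> val (t q) = N)) => [Hall|Hno].
    by left; split; [|split] => // q _; apply: H0.
  have [p [Hp0 HpN]] : exists p : 'I_n, val p = 0 /\ val (t p) <> N.
    apply: NNPP => H; apply: Hno => p Hp; apply: NNPP => Hne; apply: H; exists p; split=> //.
  right; split => q Hq.
    have -> : q = p by apply: val_inj; rewrite Hq Hp0.
    have := H0 p; have := Hlt (t p); lia.
  case: (eqVneq (val q) N) => [/HN //|/eqP HqN].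
  by apply: Hr; have := Hlt q; lia.
move=> [[a1 [a2 a3]]|[b1 b2]].
  split; last by left.
  split; [|split] => //.
    move=> q; case: (eqVneq (val q) 0) => [/a1 ->|/eqP /a3 //]; lia.
  move=> j Hj p Hp; left; apply: (iterN a2 (j0 := 1)) => //.
  exact: a1.
split; last by right => q Hq; apply: b2; lia.
split; [|split].
- move=> q; case: (eqVneq (val q) 0) => [/b1|/eqP /b2 ->]; lia.
- move=> q HqN; apply: b2; lia.
- move=> j Hj p Hp; case: (eqVneq j 1) => [->|Hj1].
    right => q Hq /= Heq; have := b1 p Hp; rewrite Heq b2 //; lia.
  left; apply: (iterN (fun q Hq => b2 q ltac:(lia)) (j0 := 2)).
    by rewrite /= b2 //; have := b1 p Hp; lia.
  by rewrite ltn_neqAle eq_sym Hj1.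
Qed.

Variable z : 'I_n.

Lemma Sn_trans (t : {ffun 'I_n -> 'I_n}) :
  Sn (fun k => val (t (insubd z k))) -> in_trans_semigroup (@W_delta n) t.
Proof.
move=> [w [Hw Hf]]; exists w; split=> // q; apply: val_inj; rewrite Hf valKd //.
Qed.

Lemma insubd_val k : k < n -> val (insubd z k) = k.
Proof. by move=> Hk; rewrite insubdK. Qed.

Lemma trans_iff (t : {ffun 'I_n -> 'I_n}) : in_trans_semigroup (@W_delta n) t <-> Wsf t.
Proof.
rewrite Wsf_PAB; split.
  move=> [w [Hw Ht]]; exact: (word_PAB Hw Ht).
have HNn : N < n by lia.
move=> [[a1 [a2 a3]]|[b1 b2]]; apply: Sn_trans.
  apply: SA; split; [|split].
  - by apply: a1; rewrite insubd_val //; lia.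
  - by apply: a2; rewrite insubd_val //; lia.
  - move=> q Hq; have Hqn : q < n by lia.
    have := a3 (insubd z q); rewrite insubd_val //.
    have Hb : val (t (insubd z q)) < n := ltn_ord _; lia.
have H0n : 0 < n by lia.
have := b1 (insubd z 0); rewrite insubd_val // => /(_ erefl) Hk.
apply: Sn_ext (SB Hk) _ => q Hq.
case: (eqVneq q 0) => [->|Hq0] //.
by rewrite b2 // insubd_val //; apply/eqP.
Qed.

Definition z0 := insubd z 0.
Definition zN := insubd z N.
Lemma val_z0 : val z0 = 0. Proof. by rewrite insubd_val //; lia. Qed.
Lemma val_zN : val zN = N. Proof. by rewrite insubd_val //; lia. Qed.

Lemma card_isN : #|[pred y : 'I_n | val y == N]| = 1.
Proof.
rewrite -(card1 zN); apply: eq_card => y; rewrite !inE -val_eqE /= val_zN //.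
Qed.

Lemma card_nz : #|[pred y : 'I_n | val y != 0]| = n - 1.
Proof.
transitivity #|predC1 z0|; last by rewrite cardC1 card_ord; lia.
by apply: eq_card => y; rewrite !inE -val_eqE /= val_z0.
Qed.

Lemma card_inner : #|[pred y : 'I_n | 1 <= val y <= n - 2]| = n - 2.
Proof.
have H2 : #|[pred y : 'I_n | (val y == 0) || (val y == N)]| = 2.
  have -> : 2 = (z0 != zN).+1 by rewrite -val_eqE /= val_z0 val_zN; case: eqP => //; lia.
  rewrite -card2; apply: eq_card => y; rewrite !inE -!val_eqE /= val_z0 val_zN //.
have := cardC [pred y : 'I_n | (val y == 0) || (val y == N)]; rewrite H2 card_ord.
have -> : #|[predC [pred y : 'I_n | (val y == 0) || (val y == N)]]| =
          #|[pred y : 'I_n | 1 <= val y <= n - 2]|.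
  apply: eq_card => y; rewrite !inE; have := ltn_ord y; case: eqP; case: eqP => /=; lia.
lia.
Qed.

Definition FA (q : 'I_n) : pred 'I_n :=
  if (val q == 0) || (val q == N) then [pred y : 'I_n | val y == N]
  else [pred y : 'I_n | val y != 0].
Definition FB (q : 'I_n) : pred 'I_n :=
  if val q == 0 then [pred y : 'I_n | 1 <= val y <= n - 2]
  else [pred y : 'I_n | val y == N].

Lemma famA (t : {ffun 'I_n -> 'I_n}) : t \in family FA <-> PA t.
Proof.
split.
  move/familyP => H; split; [|split] => q Hq; have := H q; rewrite /FA.
  - by rewrite Hq eqxx /= inE => /eqP.
  - by rewrite Hq eqxx orbT inE => /eqP.
  - case: ifP => _; rewrite inE => /eqP; [move=> ->; lia | done].
move=> [a1 [a2 a3]]; apply/familyP => q; rewrite /FA.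
case: (eqVneq (val q) 0) => [Hq|Hq] /=; first by rewrite inE a1.
case: (eqVneq (val q) N) => [HqN|HqN] /=; first by rewrite inE a2.
by rewrite inE; apply/eqP; apply: a3; apply/eqP.
Qed.

Lemma famB (t : {ffun 'I_n -> 'I_n}) : t \in family FB <-> PB t.
Proof.
split.
  move/familyP => H; split => q Hq; have := H q; rewrite /FB.
  - by rewrite Hq eqxx inE.
  - by rewrite ifF ?inE => [/eqP //|]; apply/eqP.
move=> [b1 b2]; apply/familyP => q; rewrite /FB.
case: (eqVneq (val q) 0) => [Hq|Hq] /=; first by rewrite inE b1.
by rewrite inE b2 //; apply/eqP.
Qed.

Lemma card_fam (F : 'I_n -> pred 'I_n) (g : 'I_n -> nat) : (forall x, #|F x| = g x) ->
  #|(family F : simpl_pred {ffun 'I_n -> 'I_n})| = \prod_(x : 'I_n) g x.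
Proof.
move=> H. rewrite card_family foldrE big_image /=.
apply: eq_bigr => x _. exact: H.
Qed.

Lemma card_famA : #|(family FA : simpl_pred {ffun 'I_n -> 'I_n})| = (n - 1) ^ (n - 2).
Proof.
rewrite (@card_fam _ (fun x => if ~~ ((val x == 0) || (val x == N)) then n - 1 else 1)).
  rewrite -big_mkcond /= prod_nat_const; congr (_ ^ _).
  rewrite -card_inner; apply: eq_card => y; rewrite !inE; have := ltn_ord y.
  rewrite unfold_in /=; case: eqP; case: eqP => /=; lia.
move=> x; rewrite /FA; case: ifP => _ /=; [exact: card_isN | exact: card_nz].
Qed.

Lemma card_famB : #|(family FB : simpl_pred {ffun 'I_n -> 'I_n})| = n - 2.
Proof.
rewrite (@card_fam _ (fun x => if val x == 0 then n - 2 else 1)).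
  rewrite -big_mkcond /= prod_nat_const.
  have -> : #|[pred x : 'I_n | val x == 0]| = 1.
    rewrite -(card1 z0); apply: eq_card => y; rewrite !inE -val_eqE /= val_z0 //.
  by rewrite expn1.
move=> x; rewrite /FB; case: ifP => _ /=; [exact: card_inner | exact: card_isN].
Qed.

Lemma count_part : exists s : seq {ffun 'I_n -> 'I_n},
  [/\ uniq s, (forall t, t \in s <-> Wsf t) & size s = (n - 1) ^ (n - 2) + (n - 2)].
Proof.
set P := [predU (family FA : simpl_pred {ffun 'I_n -> 'I_n}) & (family FB : simpl_pred {ffun 'I_n -> 'I_n})].
exists (enum P); split.
- exact: enum_uniq.
- move=> t; rewrite mem_enum inE Wsf_PAB; split.
    by case/orP => [/famA|/famB]; auto.
  by case=> [/famA|/famB] ->; rewrite ?orbT.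
- rewrite -cardE -card_famA -card_famB -cardUI.
  have -> : #|[predI (family FA : simpl_pred {ffun 'I_n -> 'I_n}) & (family FB : simpl_pred {ffun 'I_n -> 'I_n})]| = 0.
    apply: eq_card0 => t; rewrite !inE; apply/negP => /andP [/famA [a1 _] /famB [b1 _]].
    have := a1 z0 val_z0; have := b1 z0 val_z0; lia.
  by rewrite addn0.
Qed.

Lemma reach (s0 q : 'I_n) : val s0 = 0 -> exists w, dstar (@W_delta n) s0 w = q.
Proof.
move=> Hs0; have Hq : val q < n := ltn_ord q.
case: (eqVneq (val q) 0) => [H0|/eqP H0].
  by exists [::]; apply: val_inj; rewrite /= Hs0 H0.
have : Sn (fun k => if k == 0 then val q else N).
  case: (eqVneq (val q) N) => [HN|/eqP HN].
    apply: SA; split; [|split] => /=; first by rewrite HN.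
      by rewrite ifF //; apply/eqP; lia.
    by move=> k Hk; rewrite ifF; [lia | apply/eqP; lia].
  by apply: SB; lia.
move=> [w [_ Hw]]; exists w; apply: val_inj; rewrite Hw Hs0 //.
Qed.

Lemma distinguish (p : 'I_n) : val p <> N ->
  exists v, forall x : 'I_n, val (dstar (@W_delta n) x v) = if val x == val p then 1 else N.
Proof.
move=> HpN; have Hp : val p < n := ltn_ord p.
have : Sn (fun x => if x == val p then 1 else N).
  case: (eqVneq (val p) 0) => [H0|/eqP H0].
    apply: Sn_ext (SB (k := 1) ltac:(lia)) _ => q Hq; rewrite H0 //.
  apply: SA; split; [|split]; cbv beta.
  - by rewrite ifF //; apply/eqP; lia.
  - by rewrite ifF //; apply/eqP; lia.
  - by move=> k Hk; case: ifP => _; lia.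
move=> [w [_ Hw]]; exists w => x; exact: Hw.
Qed.

Lemma minimal (s0 : 'I_n) : val s0 = 0 -> minimal_dfa (@W_delta n) s0 (@W_final n).
Proof.
move=> Hs0 Q' d' q0' F' Hl.
have Hr : forall q : 'I_n, exists w, dstar (@W_delta n) s0 w = q by move=> q; exact: reach.
pose rw q := proj1_sig (constructive_indefinite_description _ (Hr q)).
have Hrw : forall q, dstar (@W_delta n) s0 (rw q) = q.
  by move=> q; rewrite /rw; case: (constructive_indefinite_description _ _).
pose phi q := dstar d' q0' (rw q).
have Hsep : forall q1 q2 : 'I_n, val q1 <> N -> q1 != q2 -> phi q1 = phi q2 -> False.
  move=> q1 q2 HN Hne Heq; have [v Hv] := distinguish HN.
  have E1 := Hl (rw q1 ++ v); have E2 := Hl (rw q2 ++ v).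
  rewrite /accepts !dstar_cat !Hrw in E1 E2.
  rewrite /phi in Heq; rewrite Heq E2 /W_final !Hv eqxx in E1.
  move: E1; rewrite ifF; last by rewrite val_eqE eq_sym; apply: negbTE.
  by case: eqP => //; lia.
suff Hi : injective phi by exact: (leq_card phi Hi).
move=> q1 q2 Heq; apply/eqP; apply: contraT => Hne; exfalso.
case: (eqVneq (val q1) N) => [HN1|/eqP HN1]; last exact: Hsep q1 q2 HN1 Hne Heq.
apply: (Hsep q2 q1) => //; last by rewrite eq_sym.
move=> HN2; move: Hne; have -> : q1 = q2 by apply: val_inj; rewrite HN1 HN2.
by rewrite eqxx.
Qed.

Lemma sfree (s0 : 'I_n) : val s0 = 0 -> suffix_free (accepts (@W_delta n) s0 (@W_final n)).
Proof.
move=> Hs0 w u Hw Hu /suffixP [p Hp]; subst w.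
case: p Hw => [//|x p] Hw; exfalso.
move: Hw Hu; rewrite /accepts /W_final /= dstar_cat => /eqP Hw /eqP Hu.
have Hx : val (dstar (@W_delta n) s0 (x :: p)) <> 0.
  have [[a1 _]|[b1 _]] := @word_PAB (x :: p) (fun q => dstar (@W_delta n) q (x :: p)) ltac:(done) (fun q => erefl).
    by rewrite (a1 s0 Hs0); lia.
  by have := b1 s0 Hs0; lia.
have Hu0 : u <> [::] by move=> Hu0; move: Hu; rewrite Hu0 /= Hs0.
have [[a1 _]|[_ b2]] := @word_PAB u (fun q => dstar (@W_delta n) q u) Hu0 (fun q => erefl).
  by move: Hu; rewrite (a1 s0 Hs0); lia.
by move: Hw; rewrite (b2 _ Hx); lia.
Qed.
End Gen.

Theorem proposition2 (n : nat) (Hn : 4 <= n) (q0 : 'I_n) (Hq0 : val q0 = 0) :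
  minimal_dfa (@W_delta n) q0 (@W_final n)
  /\ suffix_free (accepts (@W_delta n) q0 (@W_final n))
  /\ (forall t : {ffun 'I_n -> 'I_n},
        in_trans_semigroup (@W_delta n) t <-> Wsf t)
  /\ (exists s : seq {ffun 'I_n -> 'I_n},
        [/\ uniq s, (forall t, t \in s <-> Wsf t)
          & size s = (n - 1) ^ (n - 2) + (n - 2)])
  /\ (forall t : {ffun 'I_n -> 'I_n},
        (forall q : 'I_n, val q = 0 -> val (t q) = n.-1) ->
        (forall q : 'I_n, val q = n.-1 -> val (t q) = n.-1) ->
        (forall q : 'I_n, 1 <= val q <= n - 2 -> val (t q) <> 0) ->
        Wsf t)
  /\ (forall t : {ffun 'I_n -> 'I_n},
        (forall q : 'I_n, val q = 0 -> 1 <= val (t q) <= n - 2) ->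
        (forall q : 'I_n, val q <> 0 -> val (t q) = n.-1) ->
        Wsf t).
Proof.
split; first exact: (minimal Hn Hq0).
split; first exact: (sfree Hn Hq0).
split; first by move=> t; exact: (trans_iff Hn q0 t).
split; first exact: (count_part Hn q0).
split.
  move=> t a1 a2 a3; apply/(Wsf_PAB Hn); left; split; [|split] => // q Hq.
  have Hlt : val q < n := ltn_ord q.
  case: (eqVneq (val q) n.-1) => [/a2 ->|/eqP HN]; first lia.
  by apply: a3; lia.
by move=> t b1 b2; apply/(Wsf_PAB Hn); right.
Qed.
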